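(* Let $e_1=(1:0:0)$, $e_2=(0:1:0)$, $e_3=(0:0:1)$, $e_4=(1:1:1)$ and $\mathcal S_1=\{e_1\}$, $\mathcal S_2=\{e_1,e_2\}$, $\mathcal S_3=\{e_1,e_2,e_3\}$, $\mathcal S_4=\{e_1,e_2,e_3,e_4\}$. Then for $i=1,2,3,4$ one has $\operatorname{span}(F_{\mathcal S_i})=I_{\mathcal S_i}$.
   Context: $H_k\subseteq\mathbb R[x,y,z]$: real ternary forms of degree $k$; $P_{3,4}=\{f\in H_4: f\ge0\text{ on }\mathbb P^2(\mathbb R)\}$. For $s\in\mathbb P^2(\mathbb R)$: $F_s=\{f\in P_{3,4}: f(s)=0\}$ and $I_s=\{f\in H_4: \operatorname{ord}_s(f)\ge2\}$, where $\operatorname{ord}_s(f)$ is the order of vanishing of $f$ at $s$ (least degree of a nonzero homogeneous component of $f$ in affine coordinates centered at $s$). For a finite set $\mathcal S=\{s_1,\dots,s_n\}$ of distinct real points, $F_{\mathcal S}=\bigcap_iF_{s_i}$ and $I_{\mathcal S}=\bigcap_iI_{s_i}$. *)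

(* Defs.v *)
From Stdlib Require Import Reals List.
Import ListNotations.
Open Scope R_scope.

(* A real ternary quartic form is encoded by its coefficient table
   c : nat -> nat -> R, where c i j is the coefficient of x^i y^j z^(4-i-j)
   (only entries with i + j <= 4 are meaningful). *)
Definition coeffs := nat -> nat -> R.

(* membership in H_4: no junk coefficients outside the 15 monomials *)
Definition is_form4 (c : coeffs) : Prop :=
  forall i j : nat, (4 < i + j)%nat -> c i j = 0.

Definition eval4 (c : coeffs) (x y z : R) : R :=
  sum_f_R0 (fun i => sum_f_R0 (fun j =>
     c i j * x ^ i * y ^ j * z ^ (4 - i - j)) (4 - i)) 4.

Definition dx4 (c : coeffs) (x y z : R) : R :=
  sum_f_R0 (fun i => sum_f_R0 (fun j =>
     c i j * INR i * x ^ (i - 1) * y ^ j * z ^ (4 - i - j)) (4 - i)) 4.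
Definition dy4 (c : coeffs) (x y z : R) : R :=
  sum_f_R0 (fun i => sum_f_R0 (fun j =>
     c i j * x ^ i * INR j * y ^ (j - 1) * z ^ (4 - i - j)) (4 - i)) 4.
Definition dz4 (c : coeffs) (x y z : R) : R :=
  sum_f_R0 (fun i => sum_f_R0 (fun j =>
     c i j * x ^ i * y ^ j * INR (4 - i - j) * z ^ (4 - i - j - 1)) (4 - i)) 4.

Definition point := (R * R * R)%type.

(* P_{3,4}: nonnegative on P^2(R) (equivalently on R^3, by homogeneity) *)
Definition psd4 (c : coeffs) : Prop :=
  is_form4 c /\ forall x y z : R, 0 <= eval4 c x y z.

Definition vanishes_at (c : coeffs) (s : point) : Prop :=
  let '(a, b, d) := s in eval4 c a b d = 0.

Definition inF (s : point) (c : coeffs) : Prop := psd4 c /\ vanishes_at c s.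

(* I_s : ord_s(f) >= 2, i.e. f and all its first partials vanish at s *)
Definition inI (s : point) (c : coeffs) : Prop :=
  is_form4 c /\
  let '(a, b, d) := s in
  eval4 c a b d = 0 /\ dx4 c a b d = 0 /\ dy4 c a b d = 0 /\ dz4 c a b d = 0.

Definition inF_S (S : list point) (c : coeffs) : Prop :=
  forall s, In s S -> inF s c.
Definition inI_S (S : list point) (c : coeffs) : Prop :=
  is_form4 c /\ forall s, In s S -> inI s c.

Definition in_span (P : coeffs -> Prop) (c : coeffs) : Prop :=
  exists (n : nat) (l : nat -> R) (g : nat -> coeffs),
    (forall k, (k < n)%nat -> P (g k)) /\
    forall i j : nat, c i j = fold_right Rplus 0 (map (fun k => l k * g k i j) (seq 0 n)).

Definition e1 : point := (1, 0, 0).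
Definition e2 : point := (0, 1, 0).
Definition e3 : point := (0, 0, 1).
Definition e4 : point := (1, 1, 1).

Definition S_ (i : nat) : list point :=
  match i with
  | 1%nat => [e1]
  | 2%nat => [e1; e2]
  | 3%nat => [e1; e2; e3]
  | _ => [e1; e2; e3; e4]
  end.

(* Main.v *)
Require Import Defs.
From Stdlib Require Import Reals List Lra Lia FunctionalExtensionality.
From Coquelicot Require Import Coquelicot.
Open Scope R_scope.

Lemma der_x (g : coeffs) a b d :
  derivable_pt_lim (fun t => eval4 g (a+t) b d) 0 (dx4 g a b d).
Proof.
  apply is_derive_Reals. unfold eval4, dx4. simpl.
  auto_derive; [exact I|]. simpl. ring.
Qed.
Lemma der_y (g : coeffs) a b d :
  derivable_pt_lim (fun t => eval4 g a (b+t) d) 0 (dy4 g a b d).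
Proof.
  apply is_derive_Reals. unfold eval4, dy4. simpl.
  auto_derive; [exact I|]. simpl. ring.
Qed.
Lemma der_z (g : coeffs) a b d :
  derivable_pt_lim (fun t => eval4 g a b (d+t)) 0 (dz4 g a b d).
Proof.
  apply is_derive_Reals. unfold eval4, dz4. simpl.
  auto_derive; [exact I|]. simpl. ring.
Qed.

Lemma min_zero (f : R -> R) L : derivable_pt_lim f 0 L ->
  (forall t, f 0 <= f t) -> L = 0.
Proof.
  intros H Hm.
  assert (pr : derivable_pt f 0) by (exists L; exact H).
  rewrite <- (derive_pt_eq_0 f 0 L pr H).
  apply (deriv_minimum f (-1) 1 0 pr); try lra.
  intros; apply Hm.
Qed.

Lemma psd_grad g a b d : psd4 g -> eval4 g a b d = 0 ->
  dx4 g a b d = 0 /\ dy4 g a b d = 0 /\ dz4 g a b d = 0.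
Proof.
  intros [_ Hp] H0. repeat split.
  - apply (min_zero _ _ (der_x g a b d)). intros t.
    rewrite Rplus_0_r, H0. apply Hp.
  - apply (min_zero _ _ (der_y g a b d)). intros t.
    rewrite Rplus_0_r, H0. apply Hp.
  - apply (min_zero _ _ (der_z g a b d)). intros t.
    rewrite Rplus_0_r, H0. apply Hp.
Qed.

Definition comb (m n : nat) (l : nat -> R) (g : nat -> coeffs) : coeffs :=
  fun i j => fold_right Rplus 0 (map (fun k => l k * g k i j) (seq m n)).

Lemma comb_lin (L : coeffs -> R) :
  (forall a u v, L (fun i j => a * u i j + v i j) = a * L u + L v) ->
  L (fun _ _ => 0) = 0 ->
  forall n m l g, L (comb m n l g) = fold_right Rplus 0 (map (fun k => l k * L (g k)) (seq m n)).
Proof.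
  intros Hl H0. induction n; intros m l g.
  - unfold comb; simpl. exact H0.
  - unfold comb in *; simpl. rewrite <- IHn. apply Hl.
Qed.

Lemma fold_zero (h : nat -> R) n m :
  (forall k, (m <= k < m + n)%nat -> h k = 0) -> fold_right Rplus 0 (map h (seq m n)) = 0.
Proof.
  revert m; induction n; intros m H; simpl; [reflexivity|].
  rewrite H by lia. rewrite IHn; [ring|]. intros k Hk; apply H; lia.
Qed.

Ltac linsolve := intros; simpl; ring.

Lemma span_to_I (S : list point) s0 c : In s0 S -> in_span (inF_S S) c -> inI_S S c.
Proof.
  intros Hs0 [n [l [g [Hg Hc]]]].
  assert (Hce : c = comb 0 n l g) by (extensionality i; extensionality j; apply Hc).
  subst c.
  assert (Hform : is_form4 (comb 0 n l g)).
  { intros i j Hij. unfold comb. apply fold_zero. intros k Hk.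
    destruct (Hg k ltac:(lia) s0 Hs0) as [[Hf _] _]. rewrite Hf by exact Hij. ring. }
  split; [exact Hform|]. intros [[a b] d] Hs. split; [exact Hform|].
  assert (Hk : forall k, (0 <= k < 0 + n)%nat -> eval4 (g k) a b d = 0 /\
      dx4 (g k) a b d = 0 /\ dy4 (g k) a b d = 0 /\ dz4 (g k) a b d = 0).
  { intros k Hk. destruct (Hg k ltac:(lia) _ Hs) as [Hp Hv]. simpl in Hv.
    split; [exact Hv|]. apply psd_grad; assumption. }
  repeat split.
  - rewrite (comb_lin (fun c => eval4 c a b d)) by (unfold eval4; linsolve).
    apply fold_zero. intros k H. rewrite (proj1 (Hk k H)). ring.
  - rewrite (comb_lin (fun c => dx4 c a b d)) by (unfold dx4; linsolve).
    apply fold_zero. intros k H. rewrite (proj1 (proj2 (Hk k H))). ring.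
  - rewrite (comb_lin (fun c => dy4 c a b d)) by (unfold dy4; linsolve).
    apply fold_zero. intros k H. rewrite (proj1 (proj2 (proj2 (Hk k H)))). ring.
  - rewrite (comb_lin (fun c => dz4 c a b d)) by (unfold dz4; linsolve).
    apply fold_zero. intros k H. rewrite (proj2 (proj2 (proj2 (Hk k H)))). ring.
Qed.

Definition quad := (R*R*R*R*R*R)%type.
Definition qv (q : quad) (x y z : R) : R :=
  let '(a,b,c,d,e,f) := q in a*x^2 + b*y^2 + c*z^2 + d*x*y + e*x*z + f*y*z.
Definition sqT (q : quad) : coeffs := fun i j =>
  let '(a,b,c,d,e,f) := q in
  match i, j with
  | 4,0 => (a*a)%R | 0,4 => (b*b)%R | 0,0 => (c*c)%R
  | 3,1 => (2*a*d)%R | 3,0 => (2*a*e)%R | 1,3 => (2*b*d)%R | 0,3 => (2*b*f)%R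
  | 1,0 => (2*c*e)%R | 0,1 => (2*c*f)%R
  | 2,2 => (2*a*b + d*d)%R | 2,0 => (2*a*c + e*e)%R | 0,2 => (2*b*c + f*f)%R
  | 2,1 => (2*a*f + 2*d*e)%R | 1,2 => (2*b*e + 2*d*f)%R | 1,1 => (2*c*d + 2*e*f)%R
  | _,_ => (0)%R
  end%nat.

Lemma sqT_eval q x y z : eval4 (sqT q) x y z = (qv q x y z)^2.
Proof. destruct q as [[[[[a b] c] d] e] f]. unfold eval4, sqT, qv. simpl. ring. Qed.

Lemma sqT_form q : is_form4 (sqT q).
Proof.
  destruct q as [[[[[a b] c] d] e] f]. intros i j H. unfold sqT.
  destruct i as [|[|[|[|[|i]]]]]; destruct j as [|[|[|[|[|j]]]]]; simpl in H; try lia; reflexivity.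
Qed.

Lemma sqT_inF S q : (forall s, In s S -> let '(x,y,z) := s in qv q x y z = 0) -> inF_S S (sqT q).
Proof.
  intros H s Hs. split.
  - split; [apply sqT_form|]. intros x y z. rewrite sqT_eval. apply pow2_ge_0.
  - specialize (H s Hs). destruct s as [[x y] z]. simpl. rewrite sqT_eval, H. ring.
Qed.
Definition Qs1 (k : nat) : quad :=
  match k with
  | 0%nat => ((0), (1), (0), (0), (0), (0))
  | 1%nat => ((0), (0), (1), (0), (0), (0))
  | 2%nat => ((0), (0), (0), (1), (0), (0))
  | 3%nat => ((0), (0), (0), (0), (1), (0))
  | 4%nat => ((0), (0), (0), (0), (0), (1))
  | 5%nat => ((0), (0), (0), (1), (1), (0))
  | 6%nat => ((0), (1), (0), (1), (0), (0))
  | 7%nat => ((0), (1), (0), (0), (1), (0))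
  | 8%nat => ((0), (0), (1), (1), (0), (0))
  | 9%nat => ((0), (0), (1), (0), (1), (0))
  | 10%nat => ((0), (1), (0), (0), (0), (1))
  | 11%nat => ((0), (0), (1), (0), (0), (1))
  | _ => (0,0,0,0,0,0)
  end.
Definition ls1 (c : coeffs) (k : nat) : R :=
  match k with
  | 0%nat => c 0%nat 4%nat - c 1%nat 3%nat / 2 - c 1%nat 2%nat / 2 - c 0%nat 3%nat / 2
  | 1%nat => c 0%nat 0%nat - c 1%nat 1%nat / 2 - c 1%nat 0%nat / 2 - c 0%nat 1%nat / 2
  | 2%nat => c 2%nat 2%nat - c 2%nat 1%nat / 2 - c 1%nat 3%nat / 2 - c 1%nat 1%nat / 2
  | 3%nat => c 2%nat 0%nat - c 2%nat 1%nat / 2 - c 1%nat 2%nat / 2 - c 1%nat 0%nat / 2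
  | 4%nat => c 0%nat 2%nat - c 0%nat 3%nat / 2 - c 0%nat 1%nat / 2
  | 5%nat => c 2%nat 1%nat / 2
  | 6%nat => c 1%nat 3%nat / 2
  | 7%nat => c 1%nat 2%nat / 2
  | 8%nat => c 1%nat 1%nat / 2
  | 9%nat => c 1%nat 0%nat / 2
  | 10%nat => c 0%nat 3%nat / 2
  | 11%nat => c 0%nat 1%nat / 2
  | _ => 0
  end.
Definition N1 := 12%nat.

Definition Qs2 (k : nat) : quad :=
  match k with
  | 0%nat => ((0), (0), (1), (0), (0), (0))
  | 1%nat => ((0), (0), (0), (1), (0), (0))
  | 2%nat => ((0), (0), (0), (0), (1), (0))
  | 3%nat => ((0), (0), (0), (0), (0), (1))
  | 4%nat => ((0), (0), (0), (1), (1), (0))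
  | 5%nat => ((0), (0), (0), (1), (0), (1))
  | 6%nat => ((0), (0), (0), (0), (1), (1))
  | 7%nat => ((0), (0), (1), (0), (1), (0))
  | 8%nat => ((0), (0), (1), (0), (0), (1))
  | _ => (0,0,0,0,0,0)
  end.
Definition ls2 (c : coeffs) (k : nat) : R :=
  match k with
  | 0%nat => c 0%nat 0%nat - c 1%nat 0%nat / 2 - c 0%nat 1%nat / 2
  | 1%nat => c 2%nat 2%nat - c 2%nat 1%nat / 2 - c 1%nat 2%nat / 2
  | 2%nat => c 2%nat 0%nat - c 2%nat 1%nat / 2 - c 1%nat 1%nat / 2 - c 1%nat 0%nat / 2
  | 3%nat => c 0%nat 2%nat - c 1%nat 2%nat / 2 - c 1%nat 1%nat / 2 - c 0%nat 1%nat / 2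
  | 4%nat => c 2%nat 1%nat / 2
  | 5%nat => c 1%nat 2%nat / 2
  | 6%nat => c 1%nat 1%nat / 2
  | 7%nat => c 1%nat 0%nat / 2
  | 8%nat => c 0%nat 1%nat / 2
  | _ => 0
  end.
Definition N2 := 9%nat.

Definition Qs3 (k : nat) : quad :=
  match k with
  | 0%nat => ((0), (0), (0), (1), (0), (0))
  | 1%nat => ((0), (0), (0), (0), (1), (0))
  | 2%nat => ((0), (0), (0), (0), (0), (1))
  | 3%nat => ((0), (0), (0), (1), (1), (0))
  | 4%nat => ((0), (0), (0), (1), (0), (1))
  | 5%nat => ((0), (0), (0), (0), (1), (1))
  | _ => (0,0,0,0,0,0)
  end.
Definition ls3 (c : coeffs) (k : nat) : R :=
  match k with
  | 0%nat => c 2%nat 2%nat - c 2%nat 1%nat / 2 - c 1%nat 2%nat / 2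
  | 1%nat => c 2%nat 0%nat - c 2%nat 1%nat / 2 - c 1%nat 1%nat / 2
  | 2%nat => c 0%nat 2%nat - c 1%nat 2%nat / 2 - c 1%nat 1%nat / 2
  | 3%nat => c 2%nat 1%nat / 2
  | 4%nat => c 1%nat 2%nat / 2
  | 5%nat => c 1%nat 1%nat / 2
  | _ => 0
  end.
Definition N3 := 6%nat.

Definition Qs4 (k : nat) : quad :=
  match k with
  | 0%nat => (0, 0, 0, 1, -1, 0)
  | 1%nat => (0, 0, 0, 1, 0, -1)
  | 2%nat => (0, 0, 0, 2, -1, -1)
  | _ => (0,0,0,0,0,0)
  end.
Definition ls4 (c : coeffs) (k : nat) : R :=
  match k with
  | 0%nat => c 2%nat 0%nat - c 1%nat 1%nat / 2
  | 1%nat => c 0%nat 2%nat - c 1%nat 1%nat / 2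
  | 2%nat => c 1%nat 1%nat / 2
  | _ => 0
  end.
Definition N4 := 3%nat.

Ltac getpt HI p :=
  let H := fresh "Hp" in
  assert (H : inI p _) by (apply HI; simpl; tauto);
  unfold inI, p in H; destruct H as [_ H];
  unfold eval4, dx4, dy4, dz4 in H; simpl in H.

Ltac memb :=
  intros k Hk; apply sqT_inF; intros s Hs;
  repeat (first [exfalso; lia | destruct k as [|k];
     [simpl in Hs; repeat destruct Hs as [<-|Hs]; try contradiction; simpl; ring|]]).

Ltac coeffs_goal Hf :=
  intros i j;
  destruct i as [|[|[|[|[|i]]]]]; destruct j as [|[|[|[|[|j]]]]];
  simpl; try (rewrite Hf by (simpl; lia); ring); lra.

Lemma I_span1 c : inI_S (S_ 1) c -> in_span (inF_S (S_ 1)) c.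
Proof.
  intros [Hf HI]. exists N1, (ls1 c), (fun k => sqT (Qs1 k)). split.
  - unfold N1; memb.
  - getpt HI e1. coeffs_goal Hf.
Qed.
Lemma I_span2 c : inI_S (S_ 2) c -> in_span (inF_S (S_ 2)) c.
Proof.
  intros [Hf HI]. exists N2, (ls2 c), (fun k => sqT (Qs2 k)). split.
  - unfold N2; memb.
  - getpt HI e1. getpt HI e2. coeffs_goal Hf.
Qed.
Lemma I_span3 c : inI_S (S_ 3) c -> in_span (inF_S (S_ 3)) c.
Proof.
  intros [Hf HI]. exists N3, (ls3 c), (fun k => sqT (Qs3 k)). split.
  - unfold N3; memb.
  - getpt HI e1. getpt HI e2. getpt HI e3. coeffs_goal Hf.
Qed.
Lemma I_span4 c : inI_S (S_ 4) c -> in_span (inF_S (S_ 4)) c.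
Proof.
  intros [Hf HI]. exists N4, (ls4 c), (fun k => sqT (Qs4 k)). split.
  - unfold N4; memb.
  - getpt HI e1. getpt HI e2. getpt HI e3. getpt HI e4. coeffs_goal Hf.
Qed.

Theorem mainTheorem9 : forall i : nat, (1 <= i <= 4)%nat ->
  forall c : coeffs, in_span (inF_S (S_ i)) c <-> inI_S (S_ i) c.
Proof.
  intros i Hi c.
  assert (H1 : In e1 (S_ i)) by (destruct i as [|[|[|[|[|i]]]]]; simpl; tauto).
  split; [apply (span_to_I _ e1); exact H1|].
  destruct i as [|[|[|[|[|i]]]]]; try lia.
  - apply I_span1.
  - apply I_span2.
  - apply I_span3.
  - apply I_span4.
Qed.
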